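(* The Banach space $c_0$ (real or complex) has the $\mathbf{L}_{p,p}$-nu.
   Context: For a Banach space $X$: $\Pi(X)=\{(x,x^* )\in S_X\times S_{X^*}: x^*(x)=1\}$; for $T\in\mathcal{L}(X)$ (bounded linear operators on $X$), $v(T)=\sup\{|x^*(Tx)|:(x,x^* )\in\Pi(X)\}$. $X$ has the $\mathbf{L}_{p,p}$-nu if for every $\varepsilon>0$ and $(x,x^* )\in\Pi(X)$ there is $\eta(\varepsilon,(x,x^* ))>0$ such that whenever $T\in\mathcal{L}(X)$ with $v(T)=1$ satisfies $|x^*(Tx)|>1-\eta(\varepsilon,(x,x^* ))$, there is $S\in\mathcal{L}(X)$ with $v(S)=1$, $|x^*(Sx)|=1$ and $\|S-T\|<\varepsilon$. *)

(* Defs.v *)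
(* The Banach space c_0(K) is modelled as the
   predicate [in_c0] on sequences nat -> K; vectors, functionals and
   operators are plain functions, and all requirements (linearity,
   boundedness, mapping into c_0) are imposed on c_0 only.  All suprema
   (sup-norm, norm of a functional, operator norm, numerical radius) are
   written out as "least upper bound" conditions, since K = R[i] carries no
   sup operator; norms take (real) values in K. *)
From mathcomp Require Import all_boot all_order all_algebra.
From mathcomp Require Import reals complex.
Set Implicit Arguments. Unset Strict Implicit. Unset Printing Implicit Defensive.
Import Order.TTheory GRing.Theory Num.Theory.
Local Open Scope ring_scope.

Section C0.
Variable K : numFieldType.

Definition vec := nat -> K.

Definition in_c0 (x : vec) : Prop :=
  forall e : K, 0 < e -> exists N : nat, forall n : nat, (N <= n)%N -> `|x n| < e.

Definition c0_norm_eq (x : vec) (r : K) : Prop :=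
  (forall n, `|x n| <= r) /\ (forall e : K, 0 < e -> exists n, r - e < `|x n|).

Definition in_ball (x : vec) : Prop := forall n, `|x n| <= 1.

Definition in_sphere (x : vec) : Prop := in_c0 x /\ c0_norm_eq x 1.

Definition lin_functional (f : vec -> K) : Prop :=
  forall (a : K) (x y : vec), in_c0 x -> in_c0 y ->
    f (fun n => a * x n + y n) = a * f x + f y.

Definition functional_norm_eq (f : vec -> K) (r : K) : Prop :=
  (forall x, in_c0 x -> in_ball x -> `|f x| <= r) /\
  (forall e : K, 0 < e -> exists x, [/\ in_c0 x, in_ball x & r - e < `|f x|]).

Definition in_dual_sphere (f : vec -> K) : Prop :=
  lin_functional f /\ functional_norm_eq f 1.

Definition bounded_op (T : vec -> vec) : Prop :=
  [/\ (forall x, in_c0 x -> in_c0 (T x)),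
      (forall (a : K) (x y : vec), in_c0 x -> in_c0 y ->
         T (fun n => a * x n + y n) = (fun n => a * T x n + T y n)) &
      exists M : K, forall x, in_c0 x -> in_ball x -> forall n, `|T x n| <= M].

Definition in_Pi (x : vec) (f : vec -> K) : Prop :=
  [/\ in_sphere x, in_dual_sphere f & f x = 1].

Definition numrad_eq (T : vec -> vec) (r : K) : Prop :=
  (forall x f, in_Pi x f -> `|f (T x)| <= r) /\
  (forall e : K, 0 < e -> exists x f, in_Pi x f /\ r - e < `|f (T x)|).

Definition op_dist_lt (S T : vec -> vec) (eps : K) : Prop :=
  exists c : K, c < eps /\
    forall x, in_c0 x -> in_ball x -> forall n, `|S x n - T x n| <= c.

Definition c0_has_Lpp_nu : Prop :=
  forall eps : K, 0 < eps ->
  forall (x : vec) (f : vec -> K), in_Pi x f ->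
  exists eta : K, 0 < eta /\
    forall T : vec -> vec, bounded_op T -> numrad_eq T 1 ->
      1 - eta < `|f (T x)| ->
      exists S : vec -> vec,
        [/\ bounded_op S, numrad_eq S 1, `|f (S x)| = 1 & op_dist_lt S T eps].

End C0.

(* Main.v *)
Require Import Defs.
From mathcomp Require Import all_boot all_order all_algebra.
From mathcomp Require Import reals complex.
From mathcomp Require Import ring.
From Stdlib Require Import FunctionalExtensionality.
Set Implicit Arguments. Unset Strict Implicit. Unset Printing Implicit Defensive.
Import Order.TTheory GRing.Theory Num.Theory.
Local Open Scope ring_scope.

Section Gen.
Variable K : numFieldType.

Definition ph (b : K) : K := if b == 0 then 1 else `|b| / b.

Lemma ph_norm b : `|ph b| = 1.
Proof.
rewrite /ph; case: eqP => [_|/eqP h]; first by rewrite normr1.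
by rewrite normf_div normr_id divff // normr_eq0.
Qed.

Lemma ph_mul b : ph b * b = `|b|.
Proof.
rewrite /ph; case: eqP => [->|/eqP h]; first by rewrite mulr0 normr0.
by rewrite divfK.
Qed.

Definition ev (k : nat) : vec K := fun j => if j == k then 1 else 0.
Definition zero_on (q : pred nat) (z : vec K) : vec K := fun j => if q j then 0 else z j.
Definition linK (phi : vec K -> K) := forall (a : K) (x y : vec K), in_c0 x -> in_c0 y ->
  phi (fun n => a * x n + y n) = a * phi x + phi y.

Lemma in_c0_le (z z' : vec K) : in_c0 z -> (forall j, `|z' j| <= `|z j|) -> in_c0 z'.
Proof.
move=> hz hle e he; have [N hN] := hz e he; exists N => n hn.
exact: le_lt_trans (hle n) (hN n hn).
Qed.

Lemma in_c0_ev (z z' : vec K) N : in_c0 z -> (forall j, (N <= j)%N -> z' j = z j) -> in_c0 z'.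
Proof.
move=> hz heq e he; have [M hM] := hz e he; exists (maxn N M) => n hn.
rewrite heq; first by apply: hM; exact: leq_trans (leq_maxr _ _) hn.
exact: leq_trans (leq_maxl _ _) hn.
Qed.

Lemma in_c00 : in_c0 (fun _ : nat => (0:K)).
Proof. by move=> e he; exists 0%N => n _; rewrite normr0. Qed.

Lemma in_c0_evk k : in_c0 (ev k).
Proof.
apply: (in_c0_ev (N := k.+1) in_c00) => j hj.
rewrite /ev; case: eqP => // hjk; by rewrite hjk ltnn in hj.
Qed.

Lemma in_c0_scale (c : K) z : in_c0 z -> in_c0 (fun j => c * z j).
Proof.
move=> hz; have [->|hc] := eqVneq c 0.
  by apply: (in_c0_le in_c00) => j; rewrite mul0r normr0.
move=> e he.
have hc' : 0 < `|c| by rewrite normr_gt0.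
have [N hN] := hz (e / `|c|) (divr_gt0 he hc'); exists N => n hn.
rewrite normrM -ltr_pdivlMl // mulrC; exact: hN.
Qed.

Lemma in_c0_zero_on q z : in_c0 z -> in_c0 (zero_on q z).
Proof.
move=> hz; apply: (in_c0_le hz) => j; rewrite /zero_on; case: (q j) => //.
by rewrite normr0.
Qed.

Lemma lin0 phi : linK phi -> phi (fun _ => 0) = 0.
Proof.
move=> hl; have := hl 1 _ _ in_c00 in_c00.
have -> : (fun n : nat => 1 * (0:K) + 0) = (fun _ => 0).
  by apply: functional_extensionality => n; rewrite mul1r addr0.
rewrite mul1r => h; apply: (@addrI _ (phi (fun _ => 0))).
by rewrite addr0 -h.
Qed.

Lemma linZ phi a x : linK phi -> in_c0 x -> phi (fun n => a * x n) = a * phi x.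
Proof.
move=> hl hx; have := hl a _ _ hx in_c00; rewrite lin0 // addr0 => <-.
by congr phi; apply: functional_extensionality => n; rewrite addr0.
Qed.

Lemma decomp phi (q : pred nat) N z : linK phi -> (forall k, q k -> (k < N)%N) -> in_c0 z ->
  phi z = \sum_(0 <= k < N | q k) z k * phi (ev k) + phi (zero_on q z).
Proof.
move=> hl hq hz.
have gen : forall M, phi z = \sum_(0 <= k < M | q k) z k * phi (ev k) +
     phi (fun j => if q j && (j < M)%N then 0 else z j).
  elim=> [|M IH].
    rewrite big_geq // add0r; congr phi; apply: functional_extensionality => j.
    by rewrite andbF.
  rewrite big_mkcond big_nat_recr //= -big_mkcond IH -addrA; congr (_ + _).
  set w := (fun j => if q j && (j < M)%N then 0 else z j).
  set w' := (fun j => if q j && (j < M.+1)%N then 0 else z j).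
  have hw' : in_c0 w'.
    apply: (in_c0_le hz) => j; rewrite /w'; case: ifP => // _; by rewrite normr0.
  case hqM: (q M).
    have -> : w = (fun j => z M * ev M j + w' j).
      apply: functional_extensionality => j; rewrite /w /w' /ev.
      case: (eqVneq j M) => [->|hne]; first by rewrite hqM ltnn ltnSn mulr1 addr0.
      by rewrite mulr0 add0r ltnS (leq_eqVlt j M) (negbTE hne).
    by apply: hl; [exact: in_c0_evk | exact: hw'].
  rewrite add0r; congr phi; apply: functional_extensionality => j; rewrite /w /w'.
  case: (eqVneq j M) => [->|hne]; first by rewrite hqM.
  by rewrite ltnS (leq_eqVlt j M) (negbTE hne).
rewrite (gen N); congr (_ + phi _); apply: functional_extensionality => j.
rewrite /zero_on; case hj: (q j) => //=; by rewrite hq.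
Qed.


Lemma norm_part phi (q : pred nat) N : linK phi ->
  (forall u, in_c0 u -> in_ball u -> (forall k, q k -> `|u k| = 1) -> `|phi u| <= 1) ->
  (forall k, q k -> (k < N)%N) ->
  forall w, in_c0 w -> in_ball w -> (forall k, q k -> w k = 0) ->
  \sum_(0 <= k < N | q k) `|phi (ev k)| + `|phi w| <= 1.
Proof.
move=> hl hb hq w hw hwb hw0.
set th := ph (phi w).
set u : vec K := fun k => if q k then ph (phi (ev k)) else th * w k.
have hthw : in_c0 (fun k => th * w k) := in_c0_scale th hw.
have hu : in_c0 u.
  apply: (in_c0_ev (N:=N) hthw) => j hj; rewrite /u; case hqj: (q j) => //.
  by have := hq _ hqj; rewrite ltnNge hj.
have hub : in_ball u.
  move=> j; rewrite /u; case: (q j); first by rewrite ph_norm.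
  by rewrite normrM ph_norm mul1r.
have hu1 : forall k, q k -> `|u k| = 1 by move=> k hk; rewrite /u hk ph_norm.
have := hb u hu hub hu1.
rewrite (decomp hl hq hu).
have -> : zero_on q u = (fun k => th * w k).
  apply: functional_extensionality => j; rewrite /zero_on /u; case hqj: (q j) => //.
  by rewrite hw0 // mulr0.
rewrite linZ // ph_mul.
rewrite (eq_bigr (fun k => `|phi (ev k)|)); last by move=> k hk; rewrite /u hk ph_mul.
rewrite ger0_norm // addr_ge0 // sumr_ge0 //.
Qed.

Lemma Pi_coord (u : vec K) n : in_c0 u -> in_ball u -> `|u n| = 1 ->
  in_Pi u (fun z => z n / u n).
Proof.
move=> hu hub hn.
have hn0 : u n != 0 by rewrite -normr_eq0 hn oner_eq0.
have h1e : forall e : K, 0 < e -> 1 - e < 1.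
  by move=> e he; rewrite ltrBlDr ltrDl.
split.
- split => //; split => // e he; exists n; rewrite hn; exact: h1e.
- split.
    move=> a x y hx hy; rewrite mulrDl mulrA //.
  split.
    by move=> x hx hxb; rewrite normf_div hn divr1.
  move=> e he; exists u; split => //; rewrite divff // normr1; exact: h1e.
- by rewrite divff.
Qed.

Lemma lin_coord (T : vec K -> vec K) n : bounded_op T -> linK (fun z => T z n).
Proof.
case=> _ hl _ a x y hx hy /=; by rewrite (hl a x y hx hy).
Qed.

Lemma op_bound_hyp (T : vec K -> vec K) (q : pred nat) n : bounded_op T ->
  (forall x f, in_Pi x f -> `|f (T x)| <= 1) -> q n ->
  forall u, in_c0 u -> in_ball u -> (forall k, q k -> `|u k| = 1) -> `|T u n| <= 1.
Proof.
move=> hT hv hqn u hu hub hu1.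
have hn := hu1 n hqn.
have := hv _ _ (Pi_coord hu hub hn); by rewrite /= normf_div hn divr1.
Qed.

Lemma op_norm1 (T : vec K -> vec K) : bounded_op T ->
  (forall x f, in_Pi x f -> `|f (T x)| <= 1) ->
  forall z, in_c0 z -> in_ball z -> forall n, `|T z n| <= 1.
Proof.
move=> hT hv z hz hzb n.
set q : pred nat := pred1 n.
have hq : forall k, q k -> (k < n.+1)%N by move=> k /eqP ->.
have hl := lin_coord n hT.
have hnp := norm_part hl (op_bound_hyp (q:=q) hT hv (eqxx n : q n)) hq.
rewrite (decomp hl hq hz).
have hw : in_c0 (zero_on q z) := in_c0_zero_on q hz.
have hwb : in_ball (zero_on q z).
  move=> j; rewrite /zero_on; case: (q j); by rewrite ?normr0 ?hzb.
have hw0 : forall k, q k -> zero_on q z k = 0 by move=> k hk; rewrite /zero_on hk.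
have := hnp _ hw hwb hw0.
have hs : forall F : nat -> K, \sum_(0 <= k < n.+1 | q k) F k = F n.
  move=> F; rewrite big_mkcond big_nat_recr //= /q /= eqxx big_nat_cond big1 ?add0r //.
  by move=> k /andP[/andP[_ hk] _]; rewrite (ltn_eqF hk).
rewrite !hs => h; apply: le_trans (ler_normD _ _) _; apply: le_trans h.
by rewrite lerD2r normrM ler_piMl.
Qed.


Lemma term_le_sum (q : pred nat) N (F : nat -> K) k : (forall j, q j -> 0 <= F j) ->
  q k -> (k < N)%N -> F k <= \sum_(0 <= j < N | q j) F j.
Proof.
move=> hF hk hkN; rewrite big_mkcond (bigD1_seq k) /= ?hk ?mem_index_iota ?iota_uniq //.
rewrite lerDl sumr_ge0 // => j _; case: ifP => // hj; exact: hF.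
Qed.

Definition Par := forall u : K, `|u| <= 1 -> `|1-u|^+2 + `|1+u|^+2 <= 4.

Lemma align (HP : Par) (q : pred nat) N (p u : nat -> K) :
  (forall k, 0 <= p k) -> (forall k, `|u k| <= 1) ->
  forall k, q k -> (k < N)%N ->
  `|p k * (1 - u k)| ^+ 2 <=
    4 * p k * `|\sum_(0 <= j < N | q j) p j - \sum_(0 <= j < N | q j) p j * u j|.
Proof.
move=> hp hu k hk hkN.
have ht : forall j, `|1 + u j| <= 2.
  move=> j; apply: le_trans (ler_normD _ _) _; rewrite normr1.
  have -> : (2:K) = 1 + 1 by [].
  by rewrite lerD2l.
have h1 : forall j, `|1 - u j|^+2 <= 4 * (2 - `|1 + u j|).
  move=> j; have := HP _ (hu j).
  rewrite -lerBrDr => h; apply: le_trans h _.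
  have -> : 4 - `|1 + u j| ^+ 2 = (2 - `|1 + u j|) * (2 + `|1 + u j|) by ring.
  rewrite [4 * _]mulrC; apply: ler_wpM2l; first by rewrite subr_ge0.
  have -> : (4:K) = 2 + 2 by ring.
  by rewrite lerD2l.
set P := \sum_(0 <= j < N | q j) p j.
set Q := \sum_(0 <= j < N | q j) p j * u j.
set D := \sum_(0 <= j < N | q j) p j * (2 - `|1 + u j|).
have hD : D <= `|P - Q|.
  have -> : D = 2 * P - \sum_(0 <= j < N | q j) `|p j * (1 + u j)|.
    rewrite /D /P mulr_sumr -sumrB; apply: eq_bigr => j _.
    rewrite normrM (ger0_norm (hp j)); ring.
  have hPQ : `|P + Q| <= \sum_(0 <= j < N | q j) `|p j * (1 + u j)|.
    have -> : P + Q = \sum_(0 <= j < N | q j) p j * (1 + u j).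
      rewrite /P /Q -big_split /=; apply: eq_bigr => j _; ring.
    exact: ler_norm_sum.
  have h2P : 2 * P <= `|P + Q| + `|P - Q|.
    have hP0 : 0 <= 2 * P by rewrite mulr_ge0 // sumr_ge0.
    rewrite -(ger0_norm hP0).
    have -> : 2 * P = (P + Q) + (P - Q) by ring.
    exact: ler_normD.
  rewrite lerBlDr; apply: le_trans h2P _; rewrite addrC lerD2l //.
have hpk : 0 <= p k * (2 - `|1 + u k|) by rewrite mulr_ge0 // subr_ge0.
have hkD : p k * (2 - `|1 + u k|) <= D.
  apply: (term_le_sum (F := fun j => p j * (2 - `|1 + u j|))) => // j _.
  by rewrite mulr_ge0 // subr_ge0.
rewrite normrM exprMn (ger0_norm (hp k)).
apply: le_trans (_ : p k ^+ 2 * (4 * (2 - `|1 + u k|)) <= _).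
  by apply: ler_wpM2l; rewrite ?exprn_ge0.
have -> : p k ^+ 2 * (4 * (2 - `|1 + u k|)) = 4 * p k * (p k * (2 - `|1 + u k|)) by ring.
apply: ler_wpM2l; first by rewrite mulr_ge0.
exact: le_trans hkD hD.
Qed.


Lemma sq_le (a d : K) : 0 <= a -> 0 <= d -> a ^+ 2 <= d ^+ 2 -> a <= d.
Proof. by move=> ha hd; rewrite ler_sqr ?nnegrE. Qed.

Lemma finite_min (P : pred nat) (v : nat -> K) N : (forall k, P k -> 0 < v k) ->
  exists a : K, [/\ 0 < a, a <= 1 & forall k, (k < N)%N -> P k -> a <= v k].
Proof.
move=> hv; elim: N => [|N [a [ha ha1 hak]]].
  by exists 1; split => // k.
case hPN: (P N); last first.
  exists a; split => // k; rewrite ltnS leq_eqVlt => /orP[/eqP ->|hk]; first by rewrite hPN.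
  exact: hak.
have hvN := hv N hPN.
have hs : 0 < a + v N by rewrite addr_gt0.
exists (a * v N / (a + v N)); split.
- by rewrite divr_gt0 // mulr_gt0.
- rewrite ler_pdivrMr // mul1r; apply: le_trans (_ : a * v N <= a * (a + v N)) _.
    by rewrite ler_pM2l // lerDr ltW.
  apply: le_trans (_ : a * (a + v N) <= 1 * (a + v N)) _; last by rewrite mul1r.
  by rewrite ler_pM2r.
- move=> k; rewrite ltnS leq_eqVlt => /orP[/eqP ->|hk] hPk.
    by rewrite ler_pdivrMr // [a * _]mulrC ler_pM2l // lerDl ltW.
  by apply: le_trans (hak k hk hPk); rewrite ler_pdivrMr // ler_pM2l // lerDr ltW.
Qed.

Lemma tail_bound phi (q : pred nat) (x : vec K) r s : linK phi -> 0 < r -> in_c0 x ->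
  (forall k, ~~ q k -> `|x k| <= r) ->
  (forall w, in_c0 w -> in_ball w -> (forall k, q k -> w k = 0) -> s + `|phi w| <= 1) ->
  `|phi (zero_on q x)| <= r * (1 - s).
Proof.
move=> hl hr hx hrx hnp.
set w := fun j => r^-1 * zero_on q x j.
have hz := in_c0_zero_on q hx.
have hw : in_c0 w := in_c0_scale _ hz.
have hwb : in_ball w.
  have hr' : 0 <= r^-1 by rewrite invr_ge0 ltW.
  move=> j; rewrite /w /zero_on normrM (ger0_norm hr').
  case hj: (q j); first by rewrite normr0 mulr0.
  by rewrite mulrC ler_pdivrMr // mul1r hrx ?hj.
have hw0 : forall k, q k -> w k = 0 by move=> k hk; rewrite /w /zero_on hk mulr0.
have hpw : phi (zero_on q x) = r * phi w.
  by rewrite /w linZ // mulrA divff ?mul1r // lt0r_neq0.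
rewrite hpw normrM (ger0_norm (ltW hr)) ler_pM2l // lerBrDl.
exact: hnp.
Qed.


Lemma eqle (a b : K) : a = b -> a <= b. Proof. by move->. Qed.

Lemma lerB_swap (a b c : K) : a - b <= c -> a - c <= b.
Proof. by rewrite lerBlDr addrC -lerBlDr. Qed.

Lemma bside (HP : Par) (T : vec K -> vec K) (q : pred nat) N (x : vec K) r n
  (mu rho delta : K) :
  bounded_op T -> (forall x f, in_Pi x f -> `|f (T x)| <= 1) ->
  (forall k, q k -> (k < N)%N) -> (forall k, q k -> `|x k| = 1) ->
  (forall k, ~~ q k -> `|x k| <= r) -> in_c0 x -> in_ball x -> 0 < r -> r < 1 ->
  q n -> `|mu| = 1 -> 0 < delta -> delta <= 1 -> rho = (1 - r) * (delta ^+ 2 / 12) ->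
  `|T x n - mu| <= rho ->
  let sb := \sum_(0 <= k < N | q k) `|T (ev k) n| in
  let c := fun k => mu * `|T (ev k) n| / (x k * sb) in
  [/\ 0 < sb, \sum_(0 <= k < N | q k) x k * c k = mu,
      (forall z, in_c0 z -> in_ball z -> `|\sum_(0 <= k < N | q k) z k * c k| <= 1) &
      (forall z, in_c0 z -> in_ball z ->
         `|\sum_(0 <= k < N | q k) z k * c k - T z n| <= N.+1%:R * delta)].
Proof.
move=> hT hv hq hqx hrx hx hxb hr0 hr1 hqn hmu hd0 hd1 hrho hy sb c.
have hl := lin_coord n hT.
have hnp := norm_part hl (op_bound_hyp (q:=q) hT hv hqn) hq.
have hsb0 : 0 <= sb by rewrite sumr_ge0.
have hsb1 : sb <= 1.
  have h0b : in_ball (fun _ : nat => (0:K)) by move=> j; rewrite normr0.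
  have := hnp _ in_c00 h0b (fun _ _ => erefl).
  by apply: le_trans; rewrite lerDl.
have ht0 := tail_bound hl hr0 hx hrx hnp.
have hdec := decomp hl hq hx.
set t0 := T (zero_on q x) n in ht0 hdec.
set Sx := \sum_(0 <= k < N | q k) x k * T (ev k) n in hdec.
have hSx : `|Sx| <= sb.
  apply: le_trans (ler_norm_sum _ _ _) _; apply: ler_sum => k hk.
  by rewrite normrM hqx // mul1r.
have hyn : `|T x n| <= sb + r * (1 - sb).
  by rewrite hdec; apply: le_trans (ler_normD _ _) _; apply: lerD.
have hyl : 1 - rho <= `|T x n|.
  apply: lerB_swap; rewrite -hmu; apply: le_trans (lerB_dist _ _) _.
  by rewrite distrC.
have hr1' : 0 < 1 - r by rewrite subr_gt0.
have h1sb : 1 - sb <= delta ^+ 2 / 12.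
  rewrite -(ler_pM2l hr1') -hrho.
  have -> : (1 - r) * (1 - sb) = 1 - (sb + r * (1 - sb)) by ring.
  apply: lerB_swap; exact: le_trans hyl hyn.
have hd2 : delta ^+ 2 <= delta.
  by rewrite expr2 ler_piMl // ltW.
have h12 : delta ^+ 2 / 12 <= delta ^+ 2.
  by rewrite ler_pdivrMr // ler_peMr // ?exprn_ge0 ?ltW // ltr1n.
have h12s : delta ^+ 2 / 12 < 1.
  rewrite ltr_pdivrMr // mul1r; apply: le_lt_trans (exprn_ile1 _ (ltW hd0) hd1) _.
  by rewrite ltr1n.
have hsbp : 0 < sb.
  have h1 : 1 - sb < 1 := le_lt_trans h1sb h12s.
  by move: h1; rewrite ltrBlDr ltrDl.
have hsbn : sb != 0 := lt0r_neq0 hsbp.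
have hx0 : forall k, q k -> x k != 0.
  by move=> k hk; rewrite -normr_eq0 hqx // oner_eq0.
have hmu0 : mu != 0 by rewrite -normr_eq0 hmu oner_eq0.
split => //.
- rewrite (eq_bigr (fun k => mu / sb * `|T (ev k) n|)); last first.
    by move=> k hk; rewrite /c; field; rewrite hsbn hx0.
  by rewrite -mulr_sumr divfK.
- move=> z hz hzb; apply: le_trans (ler_norm_sum _ _ _) _.
  apply: le_trans (_ : \sum_(0 <= k < N | q k) `|T (ev k) n| / sb <= _).
    apply: ler_sum => k hk; rewrite normrM /c normf_div !normrM hmu hqx // mul1r normr_id.
    by rewrite (ger0_norm hsb0) mul1r; apply: ler_piMl; rewrite ?divr_ge0.
  by rewrite -mulr_suml divff.
set p := fun k => `|T (ev k) n|.
set u := fun k => T (ev k) n * x k / (mu * `|T (ev k) n|).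
have hp0 : forall k, 0 <= p k by move=> k; rewrite /p.
have hu : forall k, `|u k| <= 1.
  move=> k; rewrite /u normf_div !normrM hmu mul1r normr_id.
  have [h0|hne] := eqVneq `|T (ev k) n| 0; first by rewrite h0 !mul0r ler01.
  have hpos : 0 < `|T (ev k) n| by rewrite lt_def hne normr_ge0.
  by rewrite ler_pdivrMr // mul1r ler_piMr.
have hpu : forall k, p k * u k = T (ev k) n * x k / mu.
  move=> k; rewrite /p /u.
  have [h0|hne] := eqVneq (T (ev k) n) 0; first by rewrite h0 normr0 !mul0r.
  field; rewrite hmu0 normr_eq0 hne //.
have hQ : \sum_(0 <= k < N | q k) p k * u k = Sx / mu.
  rewrite (eq_bigr (fun k => x k * T (ev k) n / mu)); last by move=> k _; rewrite hpu; ring.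
  by rewrite /Sx mulr_suml.
have hrho' : rho <= delta ^+ 2 / 12.
  rewrite hrho ler_piMl //; first by rewrite divr_ge0 // exprn_ge0 // ltW.
  by rewrite lerBlDr lerDl ltW.
have h1sb0 : 0 <= 1 - sb by rewrite subr_ge0.
have hPQ : `|sb - Sx / mu| <= delta ^+ 2 / 4.
  have -> : sb - Sx / mu = ((sb - 1) * mu - (T x n - mu) + t0) / mu.
    by rewrite hdec; field.
  rewrite normf_div hmu divr1.
  apply: le_trans (ler_normD _ _) _.
  apply: le_trans (lerD (ler_normB _ _) (lexx _)) _.
  rewrite normrM hmu mulr1 distrC.
  apply: le_trans (_ : delta ^+ 2 / 12 + delta ^+ 2 / 12 + delta ^+ 2 / 12 <= _).
    apply: lerD; first apply: lerD.
    - by rewrite (ger0_norm h1sb0).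
    - exact: le_trans hy hrho'.
    apply: le_trans ht0 _; apply: le_trans h1sb; by rewrite ler_piMl // ltW.
  by apply: eqle; field.
have hal : forall k, q k -> `|p k * (1 - u k)| <= delta.
  move=> k hk; apply: sq_le; rewrite ?normr_ge0 ?(ltW hd0) //.
  have := align HP (q:=q) hp0 hu hk (hq k hk); rewrite /= -/sb hQ => h.
  apply: le_trans h _.
  have hpk1 : p k <= 1.
    apply: le_trans hsb1; exact: (term_le_sum (F := p) (fun j _ => hp0 j) hk (hq k hk)).
  apply: le_trans (_ : 4 * 1 * (delta ^+ 2 / 4) <= _).
    apply: ler_pM; rewrite ?mulr_ge0 ?normr_ge0 //.
    by rewrite ler_wpM2l.
  by apply: eqle; field.
move=> z hz hzb.
have hdz := decomp hl hq hz.
have hw := in_c0_zero_on q hz.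
have hwb : in_ball (zero_on q z).
  move=> j; rewrite /zero_on; case: (q j); [by rewrite normr0 ler01 | exact: hzb].
have hw0 : forall k, q k -> zero_on q z k = 0 by move=> k hk; rewrite /zero_on hk.
have hnw := hnp _ hw hwb hw0.
set tz := T (zero_on q z) n in hdz hnw.
rewrite hdz.
have -> : \sum_(0 <= k < N | q k) z k * c k - (\sum_(0 <= k < N | q k) z k * T (ev k) n + tz)
    = \sum_(0 <= k < N | q k) z k * (c k - T (ev k) n) - tz.
  by rewrite opprD addrA -sumrB; congr (_ - _); apply: eq_bigr => k _; ring.
apply: le_trans (ler_normB _ _) _.
have hcb : forall k, q k -> `|c k - T (ev k) n| <= p k * (sb^-1 - 1) + delta.
  move=> k hk.
  have -> : c k - T (ev k) n = mu / x k * (p k * (sb^-1 - 1) + p k * (1 - u k)).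
    have e1 : mu / x k * (p k * (sb^-1 - 1) + p k * (1 - u k)) =
      mu / x k * (p k / sb) - mu / x k * (p k * u k) by ring.
    by rewrite e1 hpu /c /p; field; rewrite hmu0 hx0 // hsbn.
  rewrite normrM normf_div hmu (hqx k hk) divr1 mul1r.
  apply: le_trans (ler_normD _ _) _; apply: lerD; last exact: hal.
  by rewrite ger0_norm // mulr_ge0 // subr_ge0 invf_ge1.
have hsbs : \sum_(0 <= k < N | q k) p k = sb by [].
have hNd : \sum_(0 <= k < N | q k) delta <= N%:R * delta.
  rewrite big_mkcond; apply: le_trans (_ : \sum_(0 <= k < N) delta <= _).
    apply: ler_sum => k _; case: (q k) => //; exact: ltW hd0.
  by rewrite sumr_const_nat subn0 mulr_natl.
apply: le_trans (_ : _ <= \sum_(0 <= k < N | q k) (p k * (sb^-1 - 1) + delta) + (1 - sb)) _.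
  apply: lerD.
- apply: le_trans (ler_norm_sum _ _ _) _; apply: ler_sum => k hk.
  rewrite normrM; apply: le_trans _ (hcb k hk); exact: ler_piMl (normr_ge0 _) (hzb k).

- by rewrite lerBrDl.
rewrite big_split /= -mulr_suml hsbs.
have -> : sb * (sb^-1 - 1) = 1 - sb by field.
have h2 : (1 - sb) + (1 - sb) <= delta.
  apply: le_trans (lerD h1sb h1sb) _.
  apply: le_trans _ hd2.
  have -> : delta ^+ 2 / 12 + delta ^+ 2 / 12 = delta ^+ 2 / 6 by field.
  by rewrite ler_pdivrMr // ler_peMr ?exprn_ge0 ?(ltW hd0) // ler1n.
rewrite -natr1 mulrDl mul1r.
apply: le_trans (_ : \sum_(0 <= k < N | q k) delta + ((1 - sb) + (1 - sb)) <= _).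
  by apply: eqle; ring.
exact: lerD hNd h2.
Qed.







Lemma main (HP : Par) : c0_has_Lpp_nu K.
Proof.
move=> eps heps x f hPi; have [[hx [hxb _]] [hfl [hfn _]] hfx] := hPi.
have h2p : 0 < (2:K)^-1 by rewrite invr_gt0.
have h12 : (1:K) <= 2 by rewrite ler1n.
have [N hN] := hx _ h2p.
pose q : pred nat := fun k => (k < N)%N && (`|x k| == 1).
have hq : forall k, q k -> (k < N)%N by move=> k /andP[].
have hqx : forall k, q k -> `|x k| = 1 by move=> k /andP[_ /eqP].
have hposx : forall k, `|x k| != 1 -> 0 < 1 - `|x k|.
  by move=> k hk; rewrite subr_gt0 lt_neqAle hk hxb.
have [al [hal hal1 halk]] := finite_min (P := fun k => `|x k| != 1)
   (v := fun k => 1 - `|x k|) N hposx.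
pose r := 1 - al / 2.
have hal2 : al / 2 <= 2^-1 by apply: ler_piMl; [exact: ltW | exact: hal1].
have hr0 : 0 < r.
  rewrite /r subr_gt0; apply: le_lt_trans hal2 _.
  by rewrite invf_lt1 // ltr1n.
have hr1 : r < 1 by rewrite /r ltrBlDr ltrDl divr_gt0.
have hrx : forall k, ~~ q k -> `|x k| <= r.
  move=> k hk; case: (ltnP k N) => hkN.
    have hne : `|x k| != 1 by move: hk; rewrite /q hkN.
    have h := halk k hkN hne.
    have h' : `|x k| <= 1 - al by rewrite lerBrDl addrC -lerBrDl.
    apply: le_trans h' _.
    by rewrite /r lerD2l lerN2 ler_pdivrMr // ler_peMr ?(ltW hal).
  apply: ltW; apply: lt_le_trans (hN k hkN) _.
  rewrite /r lerBrDr -lerBrDl; apply: le_trans hal2 _.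
  have -> : (1 : K) - 2^-1 = 2^-1 by field.
  by [].
have hfl' : linK f := hfl.
have hfb : forall u, in_c0 u -> in_ball u -> (forall k, q k -> `|u k| = 1) -> `|f u| <= 1.
  by move=> u hu hub _; exact: hfn.
have hnpf := norm_part hfl' hfb hq.
have h0b : in_ball (fun _ : nat => (0:K)) by move=> j; rewrite normr0.
pose sa := \sum_(0 <= k < N | q k) `|f (ev k)|.
have hsa1 : sa <= 1.
  have := hnpf _ in_c00 h0b (fun _ _ => erefl).
  by apply: le_trans; rewrite lerDl.
have htf := tail_bound hfl' hr0 hx hrx hnpf.
have hsa : sa = 1.
  have hfx' := decomp hfl' hq hx.
  have h1 : 1 <= sa + r * (1 - sa).
    have : `|f x| <= sa + r * (1 - sa); last by rewrite hfx normr1.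
    rewrite hfx'; apply: le_trans (ler_normD _ _) _; apply: lerD; last exact: htf.
    apply: le_trans (ler_norm_sum _ _ _) _; apply: ler_sum => k hk.
    by rewrite normrM hqx // mul1r.
  have h2 : (1 - r) * (1 - sa) <= 0.
    have -> : (1 - r) * (1 - sa) = 1 - (sa + r * (1 - sa)) by ring.
    by rewrite subr_le0.
  move: h2; rewrite pmulr_rle0 ?subr_gt0 // subr_le0 => h2.
  by apply/eqP; rewrite eq_le hsa1 h2.
have hf0 : forall w, in_c0 w -> in_ball w -> (forall k, q k -> w k = 0) -> f w = 0.
  move=> w hw hwb hw0; have := hnpf w hw hwb hw0; rewrite -/sa hsa.
  by rewrite gerDl normr_le0 => /eqP.
have hposa : forall k, f (ev k) != 0 -> 0 < `|f (ev k)|.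
  by move=> k hk; rewrite normr_gt0.
have [al2 [hal2p hal21 hal2k]] := finite_min (P := fun k => f (ev k) != 0)
   (v := fun k => `|f (ev k)|) N hposa.
pose delta := eps / (N.+1%:R * (1 + eps)).
have hNe : 0 < N.+1%:R * (1 + eps) by rewrite mulr_gt0 // ?ltr0Sn // addr_gt0.
have hd0 : 0 < delta by rewrite divr_gt0.
have hd1 : delta <= 1.
  rewrite ler_pdivrMr // mul1r; apply: le_trans (_ : eps <= 1 * (1 + eps)) _.
    by rewrite mul1r lerDr.
  by rewrite ler_pM2r ?addr_gt0 // ler1n.
pose rho := (1 - r) * (delta ^+ 2 / 12).
have hrho0 : 0 < rho by rewrite mulr_gt0 ?subr_gt0 // divr_gt0 // exprn_gt0.
exists (al2 * rho ^+ 2 / 4); split.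
  by rewrite divr_gt0 // mulr_gt0 // exprn_gt0.
move=> T hT [hv _] hTx.
have hTn := op_norm1 hT hv.
have hy : in_c0 (T x) by case: hT => h _ _; exact: h.
have hyb : in_ball (T x) by move=> j; exact: hTn.
have hfy : f (T x) = \sum_(0 <= k < N | q k) T x k * f (ev k).
  rewrite (decomp hfl' hq hy) hf0 ?addr0 //; first exact: in_c0_zero_on.
    move=> j; rewrite /zero_on; case: (q j); [by rewrite normr0 ler01 | exact: hyb].
  by move=> k hk; rewrite /zero_on hk.
pose lam := (ph (f (T x)))^-1.
have hlam : `|lam| = 1 by rewrite normfV ph_norm invr1.
have hlam0 : lam != 0 by rewrite -normr_eq0 hlam oner_eq0.
have hflam : f (T x) = lam * `|f (T x)|.
  rewrite /lam -(ph_mul (f (T x))) mulrA mulVf ?mul1r //.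
  by rewrite -normr_eq0 ph_norm oner_eq0.
pose mu := fun k => lam * `|f (ev k)| / f (ev k).
have hmu : forall k, f (ev k) != 0 -> `|mu k| = 1.
  move=> k hk; rewrite /mu normf_div normrM hlam mul1r normr_id divff //.
  by rewrite normr_eq0.
pose p := fun k => `|f (ev k)|.
pose u := fun k => f (ev k) * T x k / (lam * `|f (ev k)|).
have hp0 : forall k, 0 <= p k by move=> k; rewrite /p.
have hu : forall k, `|u k| <= 1.
  move=> k; rewrite /u normf_div !normrM hlam mul1r normr_id.
  have [h0|hne] := eqVneq `|f (ev k)| 0; first by rewrite h0 !mul0r ler01.
  have hpos : 0 < `|f (ev k)| by rewrite lt_def hne normr_ge0.
  by rewrite ler_pdivrMr // mul1r ler_piMr.
have hpu : forall k, p k * u k = f (ev k) * T x k / lam.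
  move=> k; rewrite /p /u.
  have [h0|hne] := eqVneq (f (ev k)) 0; first by rewrite h0 normr0 !mul0r.
  field; rewrite hlam0 normr_eq0 hne //.
have hQ : \sum_(0 <= k < N | q k) p k * u k = `|f (T x)|.
  rewrite (eq_bigr (fun k => T x k * f (ev k) / lam)); last by move=> k _; rewrite hpu; ring.
  by rewrite -mulr_suml -hfy {1}hflam mulrC mulrA mulVf ?mul1r.
have hfy1 : `|f (T x)| <= 1 by apply: hfn.
have hal_a := align HP (q:=q) (N:=N) hp0 hu.
have hyk : forall k, q k -> f (ev k) != 0 -> `|T x k - mu k| <= rho.
  move=> k hk hne.
  have hpk : 0 < p k by rewrite /p normr_gt0.
  have hmu_u : T x k - mu k = mu k * (u k - 1).
    rewrite /mu /u; field; rewrite hne hlam0 normr_eq0 hne //.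
  rewrite hmu_u normrM hmu // mul1r distrC.
  apply: sq_le; rewrite ?normr_ge0 ?(ltW hrho0) //.
  have h := hal_a k hk (hq k hk); rewrite -/sa hsa hQ in h.
  rewrite (ger0_norm (_ : 0 <= 1 - `|f (T x)|)) ?subr_ge0 // in h.
  have e1 : `|p k * (1 - u k)| ^+ 2 = p k * (p k * `|1 - u k| ^+ 2).
    by rewrite normrM (ger0_norm (hp0 k)); ring.
  have heta : 1 - `|f (T x)| <= al2 * rho ^+ 2 / 4.
    by move: hTx; rewrite ltrBlDr addrC -ltrBlDr => h0; exact: ltW h0.
  have h2 : p k * (p k * `|1 - u k| ^+ 2) <= p k * (al2 * rho ^+ 2).
    rewrite -e1; apply: le_trans h _.
    have -> : al2 * rho ^+ 2 = 4 * (al2 * rho ^+ 2 / 4) by field.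
    rewrite [p k * (4 * _)]mulrA [p k * 4]mulrC.
    by apply: ler_wpM2l; [rewrite mulr_ge0 | exact: heta].
  have h3 : p k * `|1 - u k| ^+ 2 <= al2 * rho ^+ 2 by rewrite -(ler_pM2l hpk).
  rewrite -(ler_pM2l hpk); apply: le_trans h3 _.
  by apply: ler_wpM2r; [rewrite exprn_ge0 // ltW | exact: hal2k (hq k hk) hne].
have [hTc hTl _] := hT.
pose M := fun n => q n && (f (ev n) != 0).
pose c := fun n k => mu n * `|T (ev k) n| / (x k * \sum_(0 <= j < N | q j) `|T (ev j) n|).
pose S := fun (z : vec K) n => if M n then \sum_(0 <= k < N | q k) z k * c n k else T z n.
have hB : forall n, M n -> [/\ 0 < \sum_(0 <= j < N | q j) `|T (ev j) n|,
      \sum_(0 <= k < N | q k) x k * c n k = mu n,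
      (forall z, in_c0 z -> in_ball z -> `|\sum_(0 <= k < N | q k) z k * c n k| <= 1) &
      (forall z, in_c0 z -> in_ball z ->
         `|\sum_(0 <= k < N | q k) z k * c n k - T z n| <= N.+1%:R * delta)].
  move=> n /andP[hqn hne].
  exact: (bside HP hT hv hq hqx hrx hx hxb hr0 hr1 hqn (hmu n hne) hd0 hd1 (erefl rho)
     (hyk n hqn hne)).
have hSc0 : forall z, in_c0 z -> in_c0 (S z).
  move=> z hz; apply: (in_c0_ev (N:=N) (hTc z hz)) => j hj; rewrite /S.
  case hM: (M j) => //; move: hM => /andP[/hq]; by rewrite ltnNge hj.
have hSb : forall z, in_c0 z -> in_ball z -> in_ball (S z).
  move=> z hz hzb n; rewrite /S; case hM: (M n); last exact: hTn.
  by have [_ _ hbd _] := hB n hM; apply: hbd.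
have hfS : f (S x) = lam.
  have hSx := hSc0 x hx.
  rewrite (decomp hfl' hq hSx) (hf0 (zero_on q (S x))) ?addr0; first last.
  - by move=> k hk; rewrite /zero_on hk.
  - move=> j; rewrite /zero_on; case: (q j); [by rewrite normr0 ler01 | exact: hSb].
  - exact: in_c0_zero_on.
  rewrite (eq_bigr (fun k => lam * `|f (ev k)|)); last first.
    move=> k hk; rewrite /S /M hk /=.
    case: (eqVneq (f (ev k)) 0) => [->|hne] /=; first by rewrite mulr0 normr0 mulr0.
    have hMk : M k by rewrite /M hk hne.
    have [_ hsum _ _] := hB k hMk; rewrite hsum /mu; field; by rewrite hne.
  by rewrite -mulr_sumr -/sa hsa mulr1.
exists S; split.
- split => //.
  + move=> a z w hz hw; apply: functional_extensionality => n; rewrite /S.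
    case: (M n); last by rewrite (hTl a z w hz hw).
    by rewrite mulr_sumr -big_split /=; apply: eq_bigr => k _; ring.
  + by exists 1 => z hz hzb n; apply: hSb.
- split.
  + move=> x' f' [[hx' [hx'b _]] [_ [hfn' _]] _]; apply: hfn'; [exact: hSc0 hx' | exact: hSb hx' hx'b].
  + move=> e he; exists x, f; split.
      exact: hPi.
    by rewrite hfS hlam ltrBlDr ltrDl.
- by rewrite hfS.
- exists (N.+1%:R * delta); split.
    rewrite /delta.
    have -> : N.+1%:R * (eps / (N.+1%:R * (1 + eps))) = eps / (1 + eps).
      by field; rewrite lt0r_neq0 ?addr_gt0 //= addrC natr1 pnatr_eq0.
    by rewrite ltr_pdivrMr ?addr_gt0 // ltr_pMr // ltrDl.
  move=> z hz hzb n; rewrite /S; case hM: (M n).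
    by have [_ _ _ hd] := hB n hM; apply: hd.
  by rewrite subrr normr0 mulr_ge0 // ltW.
Qed.







End Gen.

Lemma ParC (C : numClosedFieldType) : Par C.
Proof.
move=> u hu.
have -> : `|1-u|^+2 + `|1+u|^+2 = 2 + 2 * `|u|^+2.
  rewrite !normCK !rmorphB !rmorphD rmorph1. ring.
have h : `|u|^+2 <= 1 by rewrite exprn_ile1.
have -> : (4:C) = 2 + 2 * 1 by ring.
by rewrite lerD2l ler_pM2l.
Qed.

Lemma ParR (R : realFieldType) : Par R.
Proof.
move=> u hu.
rewrite !real_normK ?num_real //.
have h : u^+2 <= 1. by rewrite -real_normK ?num_real // exprn_ile1.
have -> : (1-u)^+2 + (1+u)^+2 = 2 + 2 * u^+2 by ring.
have -> : (4:R) = 2 + 2 * 1 by ring.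
by rewrite lerD2l ler_pM2l.
Qed.

Theorem theorem3p5 (R : realType) :
  c0_has_Lpp_nu R /\ c0_has_Lpp_nu R[i].
Proof. by split; apply: main; [exact: ParR | exact: ParC]. Qed.
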